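(* Let $X$ be a random variable with values in a finite set, $\delta\ge0$, $k$ real, and suppose $\mathrm{H}^{\delta}_\infty(X)<k$. Then for every random variable $Y$ (on the same set) with $\mathrm{H}_\infty(Y)\ge k$, $$\Big(\sum_x|P_X(x)-P_Y(x)|^2\Big)^{1/2}>2^{-k/2}\delta.$$
   Context: $P_X(x)=\Pr[X=x]$. Min-entropy: $\mathrm{H}_\infty(Y)=-\log_2\max_y P_Y(y)$. Statistical distance: $d_1(X;Y)=\frac12\sum_z|P_X(z)-P_Y(z)|$. Smooth min-entropy: $\mathrm{H}^{\delta}_\infty(X)=\max\{\mathrm{H}_\infty(Y): Y \text{ finitely supported},\ d_1(X;Y)\le\delta\}$. *)

(* Defs.v *)
From HB Require Import structures.
From mathcomp Require Import all_boot all_order all_algebra.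
From mathcomp Require Import all_classical all_reals all_analysis.
Set Implicit Arguments. Unset Strict Implicit. Unset Printing Implicit Defensive.
Import Order.TTheory GRing.Theory Num.Theory.
Local Open Scope ring_scope.
Local Open Scope classical_set_scope.

(* A random variable with values in the finite set T is represented by its
   distribution P : {ffun T -> R}, P x = Pr[X = x]. *)
Definition is_dist {R : realType} {T : finType} (P : {ffun T -> R}) : Prop :=
  (forall x, 0 <= P x) /\ \sum_(x : T) P x = 1.

Definition log2 {R : realType} (x : R) : R := ln x / ln 2.

Definition pmax {R : realType} {T : finType} (P : {ffun T -> R}) : R :=
  \big[Num.max/0]_(x : T) P x.

Definition Hmin {R : realType} {T : finType} (P : {ffun T -> R}) : R :=
  - log2 (pmax P).

Definition d1 {R : realType} {T : finType} (P Q : {ffun T -> R}) : R :=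
  2^-1 * \sum_(z : T) `|P z - Q z|.

(* Smooth min-entropy: max (here: sup, which is attained) of H_oo(Y) over
   distributions Y on T with d_1(X;Y) <= delta. *)
Definition Hsmooth {R : realType} {T : finType} (delta : R) (P : {ffun T -> R}) : R :=
  sup [set Hmin Q | Q in [set Q : {ffun T -> R} | is_dist Q /\ d1 P Q <= delta]].

(* Main.v *)
Require Import Defs.
From HB Require Import structures.
From mathcomp Require Import all_boot all_order all_algebra.
From mathcomp Require Import all_classical all_reals all_analysis.
From mathcomp Require Import ring lra.
Import Order.TTheory GRing.Theory Num.Theory.
Local Open Scope ring_scope.

Section Aux.
Variables (R : realType) (T : finType).

Lemma pmax_ge (Q : {ffun T -> R}) x : Q x <= pmax Q.
Proof.
rewrite /pmax (bigD1 x) //= le_max lexx //.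
Qed.

Lemma pmax_le (Q : {ffun T -> R}) c : 0 <= c -> (forall x, Q x <= c) -> pmax Q <= c.
Proof.
move=> c0 H; rewrite /pmax; apply: (big_ind (fun y => y <= c)) => //.
by move=> a b ha hb; rewrite ge_max ha hb.
Qed.

Lemma pmax_dist (Q : {ffun T -> R}) : is_dist Q -> 1 <= #|T|%:R * pmax Q.
Proof.
move=> [Q0 Q1].
have := @ler_sum _ _ (index_enum T) xpredT _ _ (fun x _ => pmax_ge Q x).
by rewrite Q1 sumr_const mulr_natl.
Qed.

Arguments pmax_dist [Q].

Lemma pmax_gt0 (Q : {ffun T -> R}) : is_dist Q -> 0 < pmax Q.
Proof.
move=> hQ; have h := pmax_dist hQ.
have n0 : 0 <= (#|T|%:R : R) by [].
rewrite ltNge; apply/negP => hp.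
have : #|T|%:R * pmax Q <= 0 by rewrite mulr_ge0_le0.
lra.
Qed.

Lemma key (p k : R) : 0 < p -> (p <= 2 `^ (- k)) = (k <= - log2 p).
Proof.
move=> p0.
have l2 : 0 < ln (2 : R) by apply: ln_gt0; lra.
rewrite -ler_ln ?posrE ?powR_gt0 // ln_powR /log2 -mulNr ler_pdivlMr //.
apply/idP/idP => h; lra.
Qed.

End Aux.
Arguments pmax_dist [R T Q].
Arguments pmax_gt0 [R T Q].
Arguments pmax_ge [R T].
Arguments pmax_le [R T].
Arguments key [R].

Theorem corollary4 (R : realType) (T : finType) (PX : {ffun T -> R})
  (delta k : R) :
  is_dist PX -> 0 <= delta -> Hsmooth delta PX < k ->
  forall PY : {ffun T -> R}, is_dist PY -> k <= Hmin PY ->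
    Num.sqrt (\sum_(x : T) `|PX x - PY x| ^+ 2) > 2 `^ (- k / 2) * delta.
Proof.
move=> hX d0 hs PY hY hk.
set c := 2 `^ (- k).
have c0 : 0 < c by apply: powR_gt0; lra.
have pY : pmax PY <= c by rewrite key ?pmax_gt0.
set n : R := #|T|%:R.
have hn : 1 <= n * c.
  apply: (le_trans (pmax_dist hY)); apply: ler_wpM2l => //.
have [X0 X1] := hX.
have [Y0 Y1] := hY.
pose m x := Num.min (PX x) c.
pose e x := PX x - m x.
have m0 x : 0 <= m x by rewrite /m le_min X0 ltW.
have mc x : m x <= c by rewrite /m ge_min lexx orbT.
have mX x : m x <= PX x by rewrite /m ge_min lexx.
have e0 x : 0 <= e x by rewrite /e subr_ge0.
set E := \sum_x e x.
set S := \sum_x (c - m x).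
have E0 : 0 <= E by apply: sumr_ge0.
have sm : \sum_x m x = 1 - E by rewrite /E /e sumrB X1 opprB addrC subrK.
have hS : S = n * c - (1 - E) by rewrite /S sumrB sm sumr_const -mulr_natl.
have ES : E <= S by rewrite hS; lra.
have ESS : E * (S / S) = E.
  have [S00|Sn0] := eqVneq S 0.
    have -> : E = 0 by rewrite S00 in ES; lra.
    by rewrite mul0r.
  by rewrite mulfV ?mulr1.
pose Q := [ffun x => m x + E * ((c - m x) / S)].
have S0 : 0 <= S by lra.
have w0 x : 0 <= (c - m x) / S by rewrite divr_ge0 // subr_ge0.
have hQ : is_dist Q.
  split=> [x|]; first by rewrite ffunE addr_ge0 // mulr_ge0.
  under eq_bigr do rewrite ffunE.
  by rewrite big_split /= sm -mulr_sumr -mulr_suml -/S ESS subrK.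
have Qc : pmax Q <= c.
  apply: pmax_le; first exact: ltW.
  move=> x; rewrite ffunE.
  suff : E * ((c - m x) / S) <= c - m x by lra.
  have [S00|Sp] := eqVneq S 0.
    have -> : E = 0 by rewrite S00 in ES; lra.
    by rewrite mul0r subr_ge0.
  have Sp' : 0 < S by rewrite lt_def Sp S0.
  rewrite mulrCA ler_piMr ?subr_ge0 //.
  by rewrite ler_pdivrMr // mul1r.
have HQ : k <= Hmin Q by rewrite /Hmin -key ?pmax_gt0.
have dQ : d1 PX Q <= E.
  rewrite /d1.
  have : \sum_z `|PX z - Q z| <= \sum_z (e z + E * ((c - m z) / S)).
    apply: ler_sum => z _; rewrite ffunE.
    have -> : PX z - (m z + E * ((c - m z) / S)) = e z - E * ((c - m z) / S).
      by rewrite /e opprD addrA.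
    apply: (le_trans (ler_normB _ _)).
    by rewrite !ger0_norm // mulr_ge0.
  rewrite big_split /= -/E -mulr_sumr -mulr_suml -/S ESS => h.
  lra.
have Ed : delta < E.
  rewrite ltNge; apply/negP => hE.
  pose A := ([set Hmin Q | Q in [set Q : {ffun T -> R} | is_dist Q /\ d1 PX Q <= delta]])%classic.
  have inset : A (Hmin Q).
    exists Q => //; split => //; lra.
  have ub : has_ubound A.
    have n0 : 0 < n.
      have : 0 <= n by [].
      rewrite le_eqVlt => /orP [/eqP n0|//]; rewrite -n0 in hn; lra.
    exists (- log2 (n^-1)) => _ [Q' [hQ' _] <-].
    rewrite /Hmin /log2 -!mulNr.
    apply: ler_wpM2r; first by rewrite invr_ge0 ltW // ln_gt0 //; lra.
    rewrite lerN2 ler_ln ?posrE ?invr_gt0 ?pmax_gt0 //.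
    by rewrite -(ler_pM2l n0) mulfV ?gt_eqF // (pmax_dist hQ').
  have := ub_le_sup ub inset.
  change (Hsmooth delta PX) with (sup A) in hs; lra.
set t := c * E.
have termwise x : 2 * t * e x - (t ^+ 2 / c) * PX x <= `|PX x - PY x| ^+ 2.
  have PYc : PY x <= c := le_trans (pmax_ge PY x) pY.
  rewrite /e /m /=; have [h|h] := leP (PX x) c.
    rewrite subrr mulr0 sub0r.
    apply: (le_trans _ (sqr_ge0 _)).
    by rewrite oppr_le0 mulr_ge0 // divr_ge0 // ?sqr_ge0 // ltW.
  rewrite real_normK ?num_real //.
  have u1 : 1 <= PX x / c by rewrite ler_pdivlMr // mul1r ltW.
  set u := PX x / c in u1.
  have hu : PX x = u * c by rewrite /u divfK // gt_eqF.
  have -> : t ^+ 2 / c * PX x = t ^+ 2 * u by rewrite /u -mulrA [c^-1 * _]mulrC.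
  rewrite hu in h PYc *.
  have h1 : 0 <= (u * c - c - t) ^+ 2 by apply: sqr_ge0.
  have h2 : 0 <= t ^+ 2 * (u - 1) by rewrite mulr_ge0 ?sqr_ge0 // subr_ge0.
  have h3 : (u * c - c) ^+ 2 <= (u * c - PY x) ^+ 2.
    rewrite -subr_ge0 subr_sqr mulr_ge0 //; lra.
  nra.
have L2 : c * E ^+ 2 <= \sum_x `|PX x - PY x| ^+ 2.
  apply: le_trans (ler_sum _ (fun x _ => termwise x)).
  rewrite sumrB -mulr_sumr -mulr_sumr X1 -/E mulr1.
  have -> : t ^+ 2 / c = c * E ^+ 2.
    by rewrite /t; field; rewrite gt_eqF.
  rewrite /t; lra.
have hsq : (2 `^ (- k / 2)) ^+ 2 = c.
  have h2 : ((- k / 2 + - k / 2 == 0) ==> ((2:R) != 0)).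
    by apply/implyP => _; apply: lt0r_neq0; lra.
  by rewrite expr2 -(powRD h2) /c -splitr.
have r0 : 0 <= 2 `^ (- k / 2) * delta by rewrite mulr_ge0 // powR_ge0.
rewrite -(ger0_norm r0) -sqrtr_sqr ltr_sqrt.
  rewrite exprMn hsq; apply: lt_le_trans L2.
  rewrite ltr_pM2l // -subr_gt0 subr_sqr; apply: mulr_gt0; rewrite ?subr_gt0 //.
  by apply: (lt_le_trans (le_lt_trans d0 Ed)); rewrite lerDl.
apply: lt_le_trans L2; apply: mulr_gt0 => //; apply: exprn_gt0.
exact: le_lt_trans d0 Ed.
Qed.
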